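(* Let $(X,d^X)$ be a compact metric space, $f$ a homeomorphism of $X$ and $\mu$ a Borel measure on $X$ with $\mu(X)>0$. Then: (i) if $\mu$ is topologically stable with respect to $f$, then $Ts^\mu_f(X)=X$; (ii) for every compact metric space $(Y,d^Y)$ and every homeomorphism $h:X\to Y$, $Ts^{h^*(\mu)}_{h\circ f\circ h^{-1}}(Y)=h(Ts^\mu_f(X))$ and $Sts^{h^*(\mu)}_{h\circ f\circ h^{-1}}(Y)=h(Sts^\mu_f(X))$, where $h^*(\mu)(A)=\mu(h^{-1}(A))$; (iii) if $\mu$ is non-atomic and $x$ is a topologically stable point of $f$, then $x$ is a strong $\mu$-topologically stable point of $f$.
   Context: $B(x,\epsilon)$ and $B[x,\epsilon]$ are the open and closed balls; $\mathcal{O}_g(x)=\{g^n(x):n\in\mathbb{Z}\}$; $d_{C^0}(f,g)=\sup_x d(f(x),g(x))$. For $Z\subset X$, a set-valued map $H:Z\to 2^X$ has domain $Dom(H)=\{z\in Z:H(z)\ne\emptyset\}$; it is compact valued if each $H(z)$ is compact; $d(H,Id)\le\epsilon$ means $H(z)\subset B[z,\epsilon]$ for all $z\in Z$; $H$ is upper semi-continuous if for each $z\in Dom(H)$ and each open $O\supset H(z)$ there is $\gamma>0$ with $H(w)\subset O$ for all $w\in Z$ with $d(w,z)<\gamma$; $f\circ H=H\circ g$ means $f(H(z))=H(g(z))$ for all $z$. $\mu$ is non-atomic if $\mu(\{x\})=0$ for all $x$. $\mu$ is topologically stable w.r.t. $f$ if for every $\epsilon>0$ there is $\delta>0$ such that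 for every homeomorphism $g$ with $d_{C^0}(f,g)\le\delta$ there is an upper semi-continuous compact valued $H:X\to 2^X$ with measurable domain such that $\mu(X\setminus Dom(H))=0$, $\mu(H(x))=0$ for all $x$, $d(H,Id)\le\epsilon$ and $f\circ H=H\circ g$. A point $x$ is a $\mu$-topologically stable point of $f$ if for every $\epsilon>0$ there is $\delta>0$ such that for every homeomorphism $g$ of $X$ with $d_{C^0}(f,g)\le\delta$ there is an upper semi-continuous compact valued $H:\overline{\mathcal{O}_g(x)}\to 2^X$ with measurable domain such that (i) $\mu(H(z))=0$ for each $z\in B(x,\delta/4)\cap\overline{\mathcal{O}_g(x)}$, (ii) $d(H,Id)\le\epsilon$, (iii) $f\circ H=H\circ g$. $x$ is a strong $\mu$-topologically stable point if moreover (for the given $\epsilon$, together with $\delta$) there is a Borel set $B\subset X$ with $\mu(X\setminus B)=0$ such that additionally (iv) $\mu(X\setminus Dom(H))\le\mu(X\setminus U)$, where $U=B\cap B(x,\delta)\cap\overline{\mathcal{O}_g(x)}$. $Ts^\mu_f(X)$ and $Sts^\mu_f(X)$ denote the sets of $\mu$-topologically stable and strong $\mu$-topologically stable points. $x$ is a topologically stable point of $f$ if for every $\epsilon>0$ there is $\delta>0$ such that for every homeomorphism $g$ with $d_{C^0}(f,g)\le\delta$ there is a continuous $h:\overline{\mathcal{O}_g(x)}\to X$ with $f\circ h=h\circ g$ and $d(h(z),z)\le\epsilon$ for all $z\in\overline{\mathcal{O}_g(x)}$. *)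

(* Defs.v *)
From HB Require Import structures.
From mathcomp Require Import all_boot all_order all_algebra.
From mathcomp Require Import all_classical all_reals all_analysis.
Set Implicit Arguments. Unset Strict Implicit. Unset Printing Implicit Defensive.
Import Order.TTheory GRing.Theory Num.Theory.
Import numFieldNormedType.Exports.
Local Open Scope classical_set_scope.
Local Open Scope ring_scope.

Section Defs.
Context {R : realType} {X : metricType R}.

Local Notation dist := (@mdist R X).

Definition oball (x : X) (e : R) : set X := [set y | dist x y < e].
Definition cball (x : X) (e : R) : set X := [set y | dist x y <= e].

Definition borel (A : set X) : Prop := <<s @open X >> A.

(* mu is a Borel measure on X: a (positive, countably additive) measure on
   the Borel sigma-algebra <<s open >> (values outside Borel sets are
   irrelevant and never used) *)
Definition borel_measure (mu : set X -> \bar R) : Prop :=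
  [/\ mu set0 = 0%E,
      (forall A, borel A -> (0 <= mu A)%E) &
      (forall F : nat -> set X, (forall i, borel (F i)) -> trivIset setT F ->
         (fun n => \sum_(0 <= i < n) mu (F i))%E @ \oo --> mu (\bigcup_n F n))].

Definition homeo (f : X -> X) : Prop :=
  continuous f /\ exists g : X -> X, [/\ cancel f g, cancel g f & continuous g].

Definition dC0_le (f g : X -> X) (delta : R) : Prop :=
  forall x, dist (f x) (g x) <= delta.

(* the full orbit O_g(x) = {g^n(x) : n in Z} of a bijection g:
   y = g^n(x) (n >= 0) or x = g^n(y), i.e. y = g^(-n)(x) *)
Definition orbit (g : X -> X) (x : X) : set X :=
  [set y | exists n : nat, y = iter n g x \/ x = iter n g y].

(* set-valued maps H : Z -> 2^X, represented by H : X -> set X restricted to Z *)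
Definition Dom (Z : set X) (H : X -> set X) : set X :=
  [set z | Z z /\ H z !=set0].

Definition compact_valued (Z : set X) (H : X -> set X) : Prop :=
  forall z, Z z -> compact (H z).

Definition usc (Z : set X) (H : X -> set X) : Prop :=
  forall z, Dom Z H z -> forall O : set X, open O -> H z `<=` O ->
    exists2 gam : R, 0 < gam & forall w, Z w -> dist w z < gam -> H w `<=` O.

Definition dist_Id_le (Z : set X) (H : X -> set X) (eps : R) : Prop :=
  forall z, Z z -> H z `<=` cball z eps.

Definition semiconj (Z : set X) (f g : X -> X) (H : X -> set X) : Prop :=
  forall z, Z z -> f @` H z = H (g z).

Definition top_stable_measure (f : X -> X) (mu : set X -> \bar R) : Prop :=
  forall eps : R, 0 < eps -> exists2 delta : R, 0 < delta &
    forall g : X -> X, homeo g -> dC0_le f g delta ->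
    exists H : X -> set X,
      [/\ usc setT H, compact_valued setT H, borel (Dom setT H),
          mu (~` Dom setT H) = 0%E &
          [/\ (forall x, mu (H x) = 0%E),
               dist_Id_le setT H eps & semiconj setT f g H]].

Definition Ts_conds (f : X -> X) (mu : set X -> \bar R) (x : X)
    (eps delta : R) (g : X -> X) (H : X -> set X) : Prop :=
  let Z := closure (orbit g x) in
  [/\ usc Z H, compact_valued Z H, borel (Dom Z H) &
      [/\ (forall z, oball x (delta / 4) z -> Z z -> mu (H z) = 0%E),
           dist_Id_le Z H eps & semiconj Z f g H]].

Definition mu_top_stable_point (f : X -> X) (mu : set X -> \bar R) (x : X) :
    Prop :=
  forall eps : R, 0 < eps -> exists2 delta : R, 0 < delta &
    forall g : X -> X, homeo g -> dC0_le f g delta ->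
    exists H : X -> set X, Ts_conds f mu x eps delta g H.

Definition strong_mu_top_stable_point (f : X -> X) (mu : set X -> \bar R)
    (x : X) : Prop :=
  forall eps : R, 0 < eps -> exists2 delta : R, 0 < delta &
    exists B : set X, [/\ borel B, mu (~` B) = 0%E &
    forall g : X -> X, homeo g -> dC0_le f g delta ->
    exists H : X -> set X, Ts_conds f mu x eps delta g H /\
      let Z := closure (orbit g x) in
      (mu (~` Dom Z H) <= mu (~` (B `&` oball x delta `&` Z)))%E].

Definition Ts (f : X -> X) (mu : set X -> \bar R) : set X :=
  [set x | mu_top_stable_point f mu x].
Definition Sts (f : X -> X) (mu : set X -> \bar R) : set X :=
  [set x | strong_mu_top_stable_point f mu x].

Definition top_stable_point (f : X -> X) (x : X) : Prop :=
  forall eps : R, 0 < eps -> exists2 delta : R, 0 < delta &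
    forall g : X -> X, homeo g -> dC0_le f g delta ->
    let Z := closure (orbit g x) in
    exists h : X -> X, [/\ {within Z, continuous h},
      (forall z, Z z -> f (h z) = h (g z)) &
      (forall z, Z z -> dist (h z) z <= eps)].

Definition non_atomic (mu : set X -> \bar R) : Prop :=
  forall x : X, mu [set x] = 0%E.

End Defs.

Definition pushmu {R : realType} {X Y : Type} (h : X -> Y)
  (mu : set X -> \bar R) : set Y -> \bar R := fun A => mu (h @^-1` A).

(* Main.v *)
Require Import Defs.
From HB Require Import structures.
From mathcomp Require Import all_boot all_order all_algebra.
From mathcomp Require Import all_classical all_reals all_analysis.
Import Order.TTheory GRing.Theory Num.Theory.
Import numFieldNormedType.Exports.
Local Open Scope classical_set_scope.
Local Open Scope ring_scope.

Section S.
Context (R : realType) (X Y : metricType R).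
Lemma unifc (h : X -> Y) : compact [set: X] -> continuous h ->
  forall eps : R, 0 < eps -> exists2 d : R, 0 < d &
   forall a b, mdist a b < d -> mdist (h a) (h b) < eps.
Proof.
move=> cX ch eps e0.
have := (compact_near_coveringP _).1 cX R (0:R)^'+
  (fun d a => forall b, mdist a b < d -> mdist (h a) (h b) < eps) _.
move=> H.
have : \forall d \near (0:R)^'+, [set: X] `<=` (fun a => forall b, mdist a b < d -> mdist (h a) (h b) < eps).
  apply: H => x _.
  have := ch x.
  move=> /metricType_numDomainType.cvgrPdist_lt /(_ (eps/2)).
  rewrite divr_gt0 // => /(_ isT).
  rewrite -metricType_numDomainType.filter_from_mdist_nbhs.
  case=> r r0 Hr.
  exists ([set a | mdist x a < r/2], [set d | 0 < d < r/2]).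
  split => /=.
    rewrite -metricType_numDomainType.filter_from_mdist_nbhs.
    by exists (r/2) => //; rewrite divr_gt0.
    exists (r/2); first by rewrite /= divr_gt0.
    move=> d /= ; rewrite sub0r normrN => dr d0. rewrite d0 /=.
    by rewrite gtr0_norm in dr.
  case=> a d [/= xa /andP[d0 dr]] b ab.
  have xb : mdist x b < r.
    rewrite (le_lt_trans (metric_triangle x a b)) //.
    by rewrite (splitr r) ltrD // (lt_trans ab).
  rewrite (le_lt_trans (metric_triangle (h a) (h x) (h b))) //.
  rewrite (splitr eps) ltrD //; last by apply: Hr.
  rewrite metric_sym; apply: Hr => /=.
  by rewrite (lt_trans xa) // ltr_pdivrMr // ltr_pMr // ltr1n.
case=> e /= e0' He; exists (e/2); first by rewrite divr_gt0.
move=> a b; apply: (He (e/2)) => //=; last by rewrite divr_gt0.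
rewrite sub0r normrN gtr0_norm ?divr_gt0 //.
by rewrite ltr_pdivrMr // ltr_pMr // ltr1n.
Qed.
End S.
Section B.
Context (R : realType) (X : metricType R).
Lemma borel_sa : sigma_algebra setT (@borel R X).
Proof. exact: smallest_sigma_algebra. Qed.
Lemma borel_open (A : set X) : open A -> borel A.
Proof. by move=> oA; apply: sub_sigma_algebra. Qed.
Lemma borelC (A : set X) : borel A -> borel (~` A).
Proof. by case: borel_sa => _ hC _ /hC; rewrite setTD. Qed.
Lemma borel_closed (A : set X) : closed A -> borel A.
Proof. move=> cA; rewrite -[A]setCK; apply: (@borelC (~` A)); apply: borel_open; exact: closed_openC. Qed.
Lemma borelU (A B : set X) : borel A -> borel B -> borel (A `|` B).
Proof.
move=> bA bB; case: borel_sa => _ _ hU.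
rewrite -bigcup2E; apply: hU => -[|[|n]] //=.
by case: borel_sa.
Qed.
Lemma borelI (A B : set X) : borel A -> borel B -> borel (A `&` B).
Proof.
move=> bA bB; rewrite -[A `&` B]setCK setCI; apply: borelC; apply: borelU; exact: borelC.
Qed.
Lemma borelT : borel [set: X].
Proof. by apply: borel_open; exact: openT. Qed.
End B.
Section B2.
Context (R : realType) (X Y : metricType R).
Lemma borel_preimage (k : Y -> X) : continuous k ->
  forall A : set X, borel A -> borel (k @^-1` A).
Proof.
move=> ck A bA.
have := @smallest_sub _ (sigma_algebra setT) (@open X)
  (image_set_system setT k (@borel R Y)).
rewrite /image_set_system /= => H.
have := H _ _ A bA; rewrite /= setTI; apply.
  apply: sigma_algebra_image; exact: borel_sa.
by move=> B oB /=; rewrite setTI; apply: borel_open; move/continuousP: ck; apply.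
Qed.
End B2.
Section M.
Context (R : realType) (X : metricType R).
Lemma oball_open (x : X) r : open (oball x r).
Proof.
rewrite openE => y /= xy; rewrite /interior /=.
rewrite -metricType_numDomainType.filter_from_mdist_nbhs.
exists (r - mdist x y); first by rewrite /= subr_gt0.
move=> z /= yz; rewrite /oball /=.
rewrite (le_lt_trans (metric_triangle x y z)) //.
by rewrite -ltrBrDl.
Qed.

Lemma bm_mono (mu : set X -> \bar R) : borel_measure mu ->
  forall A B, borel A -> borel B -> A `<=` B -> (mu A <= mu B)%E.
Proof.
case=> m0 mge0 madd A B bA bB AB.
pose F := fun i : nat => if i == 0%N then A else if i == 1%N then B `\` A else set0.
have bF : forall i, borel (F i).
  move=> [|[|i]] //=; rewrite /F /=.
  - by apply: borelI => //; apply: borelC.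
  - by case: (@borel_sa R X).
have tF : trivIset setT F.
  move=> i j _ _ [z [Fi Fj]]; move: Fi Fj; rewrite /F.
  case: i => [|[|i]]; case: j => [|[|j]] //=; by [move=> ? []|move=> [] ?].
have UF : \bigcup_n F n = B.
  apply/seteqP; split.
  - move=> z [n _]; rewrite /F; case: n => [|[|n]] //=; [exact: AB | by case].
  - move=> z Bz; case: (pselect (A z)) => Az; [exists 0%N | exists 1%N] => //.
have := madd F bF tF; rewrite UF => Hc.
have Hl : (fun n => \sum_(0 <= i < n) mu (F i))%E @ \oo --> (mu A + mu (B `\` A))%E.
  apply: cvg_near_cst; exists 2%N => // n /= n2.
  case: n n2 => [|[|n]] // _.
  rewrite !big_nat_recl //= big1 ?adde0 // => i _.
have -> : mu B = (mu A + mu (B `\` A))%E.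
  exact: (cvg_unique (@ereal_hausdorff R) Hc Hl).
rewrite leeDl //; apply: mge0.
by apply: borelI => //; apply: borelC.
Qed.
End M.
Section P.
Context (R : realType) (X Y : metricType R).
Lemma within_metric (A : set X) (h : X -> Y) z : {within A, continuous h} -> A z ->
  forall O, open O -> O (h z) ->
  exists2 gam : R, 0 < gam & forall w, A w -> mdist w z < gam -> O (h w).
Proof.
move=> hc Az O oO Ohz.
have := (subspace_continuousP A h).1 hc z Az O.
move=> /(_ (open_nbhs_nbhs (conj oO Ohz))).
rewrite /= /within /=.
rewrite -metricType_numDomainType.filter_from_mdist_nbhs.
case=> gam g0 Hg; exists gam => // w Aw wz.
by apply: Hg => //=; rewrite metric_sym.
Qed.
End P.

Section Q.
Context (R : realType) (X : metricType R).
Lemma part1 (f : X -> X) (mu : set X -> \bar R) :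
  top_stable_measure f mu -> Ts f mu = [set: X].
Proof.
move=> tsm; apply/seteqP; split=> // x _ eps e0.
have [delta d0 Hd] := tsm eps e0; exists delta => // g hg dg.
have [H [usc cv bD m0 [mH dI sc]]] := Hd g hg dg.
exists H; split.
- move=> z [Zz Hz] O oO HO.
  have [gam g0 Hg] := usc z (conj I Hz) O oO HO.
  by exists gam => // w _; apply: Hg.
- by move=> z _; apply: cv.
- have -> : Dom (closure (Defs.orbit g x)) H = closure (Defs.orbit g x) `&` Dom setT H.
    by apply/seteqP; split => z [Zz Hz]; [split | case: Hz => _ Hz; split].
  apply: borelI => //; apply: borel_closed; exact: closed_closure.
- split.
  + by move=> z _ _; apply: mH.
  + by move=> z _; apply: dI.
  + by move=> z _; apply: sc.
Qed.

Lemma part3 (f : X -> X) (mu : set X -> \bar R) : borel_measure mu ->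
  non_atomic mu -> forall x, top_stable_point f x -> Sts f mu x.
Proof.
move=> bm na x tsp eps e0.
have [delta d0 Hd] := tsp eps e0; exists delta => //.
exists setT; split; first exact: borelT.
  by rewrite setCT; case: bm.
move=> g hg dg.
have [h [hc hs hd]] := Hd g hg dg.
have DE : Dom (closure (Defs.orbit g x)) (fun z => [set h z]) = closure (Defs.orbit g x).
  by apply/seteqP; split => z; [case | move=> Zz; split => //; exists (h z)].
exists (fun z => [set h z]); split; first split.
- move=> z [Zz _] O oO HO.
  have [gam g0 Hg] := @within_metric _ _ _ _ h z hc Zz O oO (HO _ erefl).
  by exists gam => // w Zw wz y ->; apply: Hg.
- by move=> z _; exact: compact_set1.
- rewrite DE; apply: borel_closed; exact: closed_closure.
- split.
  + by move=> z _ _; apply: na.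
  + move=> z Zz y ->; rewrite /cball /= metric_sym; exact: hd.
  + move=> z Zz; rewrite image_set1 hs //.
- rewrite /= DE; apply: bm_mono => //.
  + apply: borelC; apply: borel_closed; exact: closed_closure.
  + apply: borelC; apply: borelI; last by apply: borel_closed; exact: closed_closure.
    by apply: borelI; [exact: borelT | apply: borel_open; exact: oball_open].
  + by move=> w nZ [[_ _] Zw]; exact: nZ Zw.
Qed.
End Q.
Lemma closure_preimage_sub (T U : topologicalType) (k : U -> T) :
  continuous k -> forall A : set T, closure (k @^-1` A) `<=` k @^-1` closure A.
Proof.
move=> ck A.
have cl : closed (k @^-1` closure A).
  rewrite -openC.
  have -> : ~` (k @^-1` closure A) = k @^-1` (~` closure A) by [].
  move/continuousP: ck; apply.
  rewrite openC; exact: closed_closure.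
rewrite [X in _ `<=` X](closure_id _).1 //.
by apply: closureS => z /= Az; apply: subset_closure.
Qed.

Section T.
Context (R : realType) (X Y : metricType R).
Variables (h : X -> Y) (k : Y -> X).
Hypotheses (ch : continuous h) (ck : continuous k) (hk : cancel h k) (kh : cancel k h).

Lemma closure_preimageE (A : set X) : closure (k @^-1` A) = k @^-1` closure A.
Proof.
apply/seteqP; split; first exact: closure_preimage_sub.
move=> y /= cAy.
have := @closure_preimage_sub _ _ h ch (k @^-1` A) (k y).
rewrite /= kh; apply.
have -> : h @^-1` (k @^-1` A) = A by apply/seteqP; split => z /=; rewrite hk.
exact: cAy.
Qed.

Lemma iter_conj (G : Y -> Y) n z :
  iter n G (h z) = h (iter n (fun w => k (G (h w))) z).
Proof. by elim: n => //= n ->; rewrite kh. Qed.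

Lemma orbit_conj (G : Y -> Y) x :
  Defs.orbit G (h x) = k @^-1` Defs.orbit (fun w => k (G (h w))) x.
Proof.
apply/seteqP; split => y /= [n [E|E]]; exists n.
- by left; rewrite E iter_conj hk.
- by right; apply: (can_inj hk); rewrite -iter_conj kh.
- by left; rewrite -[y]kh E iter_conj.
- by right; rewrite -[y]kh iter_conj -E.
Qed.

Lemma Z_conj (G : Y -> Y) x :
  closure (Defs.orbit G (h x)) = k @^-1` closure (Defs.orbit (fun w => k (G (h w))) x).
Proof. by rewrite orbit_conj closure_preimageE. Qed.
End T.
Section T2.
Context (R : realType) (X Y : metricType R).
Variables (h : X -> Y) (k : Y -> X).
Hypotheses (ch : continuous h) (ck : continuous k) (hk : cancel h k) (kh : cancel k h).
Hypothesis cY : compact [set: Y].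

Lemma DomE (ZX : set X) (H' : X -> set X) :
  Dom (k @^-1` ZX) (fun y => h @` H' (k y)) = k @^-1` Dom ZX H'.
Proof.
apply/seteqP; split => y /= [Zy [b Hb]]; split => //.
- by case: Hb => a Ha _; exists a.
- by exists (h b); exists b.
Qed.

Lemma conds_transport f mu x eps eps' delta delta' G H' :
  (forall a b, mdist a b <= eps' -> mdist (h a) (h b) <= eps) ->
  (forall z, mdist (h x) z < delta / 4 -> mdist x (k z) < delta' / 4) ->
  Ts_conds f mu x eps' delta' (fun w => k (G (h w))) H' ->
  Ts_conds (h \o f \o k) (pushmu h mu) (h x) eps delta G (fun y => h @` H' (k y)).
Proof.
move=> Heps Hdel [u cv bD [m0 dI sc]].
rewrite /Ts_conds /= (@Z_conj _ _ _ h k ch ck hk kh).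
split; [ | | | split].
- move=> z [Zz [b [a Ha _]]] O oO HO.
  have oO' : open (h @^-1` O) by move/continuousP: ch; apply.
  have sub : H' (k z) `<=` h @^-1` O by move=> a' Ha'; apply: HO; exists a'.
  have [gam g0 Hg] := u (k z) (conj Zz (ex_intro _ a Ha)) _ oO' sub.
  have [c c0 Hc] := @unifc _ _ _ k cY ck gam g0.
  exists c => // w Zw wz b' [a' Ha' <-]; exact: (Hg (k w) Zw (Hc _ _ wz) a' Ha').
- move=> z Zz; apply: continuous_compact; last exact: cv.
  by apply: continuous_subspaceT => ? ; exact: ch.
- rewrite DomE; exact: (@borel_preimage _ _ _ k ck _ bD).
- move=> z bz Zz; rewrite /pushmu.
  have -> : h @^-1` (h @` H' (k z)) = H' (k z).
    apply/seteqP; split => a /=; last by exists a.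
    by case=> a' Ha' /(can_inj hk) <-.
  exact: (m0 (k z) (Hdel _ bz) Zz).
- move=> z Zz b [a Ha <-]; rewrite /cball /= -{1}[z]kh; apply: Heps.
  exact: (dI _ Zz _ Ha).
- move=> z Zz; have := sc (k z) Zz; rewrite /= kh => <-.
  apply/seteqP; split => _ [_ [a Ha <-] <-].
  + by exists (f a); [exists a | rewrite /= hk].
  + by exists (h a); [exists a | rewrite /= hk].
Qed.
End T2.
Section T3.
Context (R : realType) (X Y : metricType R).
Variables (h : X -> Y) (k : Y -> X).
Hypotheses (ch : continuous h) (ck : continuous k) (hk : cancel h k) (kh : cancel k h).

Lemma iv_transport (mu : set X -> \bar R) x delta delta' B G H' :
  (forall A B, borel A -> borel B -> A `<=` B -> (mu A <= mu B)%E) ->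
  (forall z, mdist (h x) (h z) < delta -> mdist x z < delta') ->
  borel B ->
  (mu (~` Dom (closure (Defs.orbit (fun w => k (G (h w))) x)) H') <=
     mu (~` (B `&` oball x delta' `&` closure (Defs.orbit (fun w => k (G (h w))) x))))%E ->
  (pushmu h mu (~` Dom (closure (Defs.orbit G (h x))) (fun y => h @` H' (k y))) <=
   pushmu h mu (~` (k @^-1` B `&` oball (h x) delta `&` closure (Defs.orbit G (h x)))))%E.
Proof.
move=> mono Hd bB Hle.
rewrite (@Z_conj _ _ _ h k ch ck hk kh) DomE /pushmu.
set ZX := closure _.
have -> : (h @^-1` ~` (k @^-1` Dom ZX H')) = ~` Dom ZX H'.
  by apply/seteqP; split => w /=; rewrite hk.
apply: (le_trans Hle); apply: mono.
- apply: borelC; apply: borelI; last by apply: borel_closed; exact: closed_closure.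
  by apply: borelI => //; apply: borel_open; exact: oball_open.
- apply: (@borel_preimage _ _ _ h ch); apply: borelC; apply: borelI.
    apply: borelI; first exact: (@borel_preimage _ _ _ k ck).
    by apply: borel_open; exact: oball_open.
  by apply: (@borel_preimage _ _ _ k ck); apply: borel_closed; exact: closed_closure.
- move=> w /= nW [[Bw bw] Zw]; apply: nW.
  by rewrite /= hk in Bw Zw; split => //; split => //; apply: Hd.
Qed.
End T3.
Lemma half_lt (R : realType) (c : R) : 0 < c -> c / 2 < c.
Proof. by move=> c0; rewrite ltr_pdivrMr // ltr_pMr // ltr1n. Qed.
Lemma quarter_lt (R : realType) (c : R) : 0 < c -> c / 4 < c.
Proof. by move=> c0; rewrite ltr_pdivrMr // ltr_pMr // ltr1n. Qed.

Section T4.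
Context (R : realType) (X Y : metricType R).
Variables (h : X -> Y) (k : Y -> X).
Hypotheses (ch : continuous h) (ck : continuous k) (hk : cancel h k) (kh : cancel k h).
Hypotheses (cX : compact [set: X]) (cY : compact [set: Y]).

Lemma homeo_conj G : homeo G -> homeo (fun w => k (G (h w))).
Proof.
case=> cG [Gi [c1 c2 cGi]]; split.
  by move=> z; exact: (continuous_comp (ch z) (continuous_comp (cG (h z)) (ck _))).
exists (fun w => k (Gi (h w))); split.
- by move=> w; rewrite kh c1 hk.
- by move=> w; rewrite kh c2 hk.
- by move=> z; exact: (continuous_comp (ch z) (continuous_comp (cGi (h z)) (ck _))).
Qed.

Lemma transport (f : X -> X) (mu : set X -> \bar R) :
  (forall A B, borel A -> borel B -> A `<=` B -> (mu A <= mu B)%E) ->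
  forall x, (Ts f mu x -> Ts (h \o f \o k) (pushmu h mu) (h x)) /\
            (Sts f mu x -> Sts (h \o f \o k) (pushmu h mu) (h x)).
Proof.
move=> mono x.
have pre : forall eps : R, 0 < eps -> exists2 e' : R, 0 < e' &
   forall a b, mdist a b <= e' -> mdist (h a) (h b) <= eps.
  move=> eps e0; have [e1 e10 He1] := @unifc _ _ _ h cX ch eps e0.
  exists (e1 / 2); first by rewrite divr_gt0.
  by move=> a b ab; apply/ltW/He1; apply: (le_lt_trans ab); exact: half_lt.
have post : forall d' : R, 0 < d' -> exists2 d : R, 0 < d &
   [/\ (forall z, mdist (h x) z < d / 4 -> mdist x (k z) < d' / 4),
       (forall z, mdist (h x) (h z) < d -> mdist x z < d') &
       (forall G, dC0_le (h \o f \o k) G d -> dC0_le f (fun w => k (G (h w))) d')].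
  move=> d' d0; have d40 : 0 < d' / 4 by rewrite divr_gt0.
  have [c c0 Hc] := @unifc _ _ _ k cY ck (d' / 4) d40.
  have c2 : c / 2 < c by exact: half_lt.
  exists (c / 2); first by rewrite divr_gt0.
  split.
  - move=> z zx; rewrite -{1}[x]hk; apply: Hc; apply: (lt_trans zx).
    apply: lt_trans c2; apply: quarter_lt; by rewrite divr_gt0.
  - move=> z zx; apply: (@lt_trans _ _ (d'/4)); last exact: quarter_lt.
    by rewrite -{1}[x]hk -{1}[z]hk; apply: Hc; exact: lt_trans c2.
  - move=> G dG z; have -> : f z = k ((h \o f \o k) (h z)) by rewrite /= !hk.
    apply: (@le_trans _ _ (d'/4)); last exact/ltW/quarter_lt.
    apply/ltW/Hc.
    exact: le_lt_trans (dG (h z)) c2.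
split => Hx eps e0; have [e' e'0 He'] := pre eps e0.
- have [d' d'0 Hd'] := Hx e' e'0.
  have [d d0 [P1 P2 P3]] := post d' d'0.
  exists d => // G hG dG.
  have [H' HH'] := Hd' _ (homeo_conj G hG) (P3 G dG).
  exists (fun y => h @` H' (k y)).
  exact: (@conds_transport _ _ _ h k ch ck hk kh cY f mu x eps e' d d' G H' He' P1 HH').
- have [d' d'0 [B [bB mB HB]]] := Hx e' e'0.
  have [d d0 [P1 P2 P3]] := post d' d'0.
  exists d => //; exists (k @^-1` B); split.
  + exact: (@borel_preimage _ _ _ k ck).
  + rewrite /pushmu; have -> : (h @^-1` ~` (k @^-1` B)) = ~` B.
      by apply/seteqP; split => w /=; rewrite hk.
    exact: mB.
  + move=> G hG dG.
    have [H' [HH' Hiv]] := HB _ (homeo_conj G hG) (P3 G dG).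
    exists (fun y => h @` H' (k y)); split.
      exact: (@conds_transport _ _ _ h k ch ck hk kh cY f mu x eps e' d d' G H' He' P1 HH').
    exact: (@iv_transport _ _ _ h k ch ck hk kh mu x d d' B G H' mono P2 bB Hiv).
Qed.
End T4.
Theorem proposition3p8 (R : realType) (X : metricType R)
  (f : X -> X) (mu : set X -> \bar R) :
  compact [set: X] -> homeo f -> borel_measure mu -> (0 < mu [set: X])%E ->
  [/\ (top_stable_measure f mu -> Ts f mu = [set: X]),
      (forall (Y : metricType R) (h : X -> Y) (hinv : Y -> X),
         compact [set: Y] -> continuous h -> continuous hinv ->
         cancel h hinv -> cancel hinv h ->
         Ts (h \o f \o hinv) (pushmu h mu) = h @` Ts f mu /\
         Sts (h \o f \o hinv) (pushmu h mu) = h @` Sts f mu) &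
      (non_atomic mu -> forall x : X, top_stable_point f x -> Sts f mu x)].
Proof.
move=> cX hf bm _; split.
- exact: (@part1 _ _ f mu).
- move=> Y h k cY ch ck hk kh.
  have mono := @bm_mono _ _ mu bm.
  have monoY : forall A B : set Y, borel A -> borel B -> A `<=` B ->
      (pushmu h mu A <= pushmu h mu B)%E.
    move=> A B bA bB AB; apply: mono.
    + exact: (@borel_preimage _ _ _ h ch).
    + exact: (@borel_preimage _ _ _ h ch).
    + by move=> z /= /AB.
  have fE : k \o (h \o f \o k) \o h = f by apply: funext => z /=; rewrite !hk.
  have muE : pushmu k (pushmu h mu) = mu.
    apply: funext => A; rewrite /pushmu; congr mu.
    by apply/seteqP; split => z /=; rewrite hk.
  split; apply/seteqP; split.
  + move=> y Hy.
    have := (@transport _ Y X k h ck ch kh hk cY cX _ _ monoY y).1 Hy.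
    by rewrite fE muE => H; exists (k y) => //; rewrite kh.
  + by move=> _ [x Hx <-]; exact: (@transport _ X Y h k ch ck hk kh cX cY _ _ mono x).1 Hx.
  + move=> y Hy.
    have := (@transport _ Y X k h ck ch kh hk cY cX _ _ monoY y).2 Hy.
    by rewrite fE muE => H; exists (k y) => //; rewrite kh.
  + by move=> _ [x Hx <-]; exact: (@transport _ X Y h k ch ck hk kh cX cY _ _ mono x).2 Hx.
- by move=> na x; exact: (@part3 _ _ f mu bm na x).
Qed.
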